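(* Let $A=(A_1,A_2)\in\mathbb{N}^2$ with $\gcd(A_1,A_2)=1$, let $s\ge 2$, and let $$\varphi(x,y)=\sum_{i=1}^s a_i x^{\alpha_i}y^{\beta_i},$$ where $a_i\neq 0$, $\alpha_i,\beta_i\in\mathbb{N}\cup\{0\}$, $A_1\alpha_i+A_2\beta_i=B$ for all $i$ with a common $B\in\mathbb{N}$, and $\alpha_1>\dots>\alpha_s\ge 0$. Put $g(u)=\sum_{i=1}^s a_i u^{(\alpha_1-\alpha_i)/A_2}$. Assume $a_1>0$, $a_s>0$ and $\alpha_1,\beta_1,\alpha_s,\beta_s$ are even nonnegative integers. Then $\varphi$ is nondegenerate in the weak sense (i.e. $\varphi(x,y)\neq 0$ whenever $x\neq 0$ and $y\neq 0$) if and only if $g(u)>0$ for all $u\in\mathbb{R}$, i.e. if and only if $g$ has no real roots.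
   Context: $\mathbb{N}=\{1,2,\dots\}$. The exponents $(\alpha_1-\alpha_i)/A_2$ are nonnegative integers; $g$ is the characteristic polynomial of $\varphi$, and $\varphi(x,y)=x^{\alpha_1}y^{\beta_1}g(x^{-A_2}y^{A_1})$ for $x\neq0$. *)

(* Defs.v *)
From mathcomp Require Import all_boot all_order all_algebra.
From mathcomp Require Import reals.
Set Implicit Arguments. Unset Strict Implicit. Unset Printing Implicit Defensive.
Import Order.TTheory GRing.Theory Num.Theory.
Local Open Scope ring_scope.

(* Indices i = 1..s of the paper are 0..s-1 here. *)

Definition phi (R : realType) (s : nat) (a : nat -> R) (alpha beta : nat -> nat)
  (x y : R) : R :=
  \sum_(i < s) a i * x ^+ alpha i * y ^+ beta i.

Definition gfun (R : realType) (s : nat) (a : nat -> R) (alpha : nat -> nat)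
  (A2 : nat) (u : R) : R :=
  \sum_(i < s) a i * u ^+ ((alpha 0%N - alpha i) %/ A2)%N.

Definition weakly_nondegenerate (R : realType) (f : R -> R -> R) : Prop :=
  forall x y : R, x != 0 -> y != 0 -> f x y != 0.

(* Main.v *)
Require Import Defs.
From mathcomp Require Import all_boot all_order all_algebra.
From mathcomp Require Import reals.
From mathcomp Require Import ring lra zify.
Import Order.TTheory GRing.Theory Num.Theory.
Local Open Scope ring_scope.

Lemma oddroot (R : rcfType) (n : nat) (c : R) : odd n -> exists y, y ^+ n = c.
Proof.
move=> on.
have n0 : (0 < n)%N by case: n on.
pose M := 1 + `|c|.
have M1 : 1 <= M by rewrite /M lerDl.
have MM : M <= M ^+ n by exact: ler_eXnr.
have cM : `|c| <= M by rewrite /M lerDr.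
have h1 := ler_norm c; have h2 : -c <= `|c| by rewrite -normrN ler_norm.
have [||y _ ry] := @poly_ivt R ('X^n - c%:P) (- M) M.
- lra.
- rewrite !hornerE exprNn -signr_odd on expr1.
  apply/andP; split; nra.
by exists y; move: ry; rewrite /root !hornerE subr_eq0 => /eqP.
Qed.

Lemma kfacts (A1 A2 a0 b0 ai bi : nat) : (0 < A2)%N -> coprime A1 A2 ->
  (ai <= a0)%N -> (A1 * ai + A2 * bi = A1 * a0 + A2 * b0)%N ->
  let k := ((a0 - ai) %/ A2)%N in a0 = (ai + A2 * k)%N /\ bi = (b0 + A1 * k)%N.
Proof.
move=> A2p cop le e k.
have e2 : (A2 * (bi - b0) = A1 * (a0 - ai))%N by nia.
have dv : (A2 %| a0 - ai)%N.
  have c2 : coprime A2 A1 by rewrite coprime_sym.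
  by rewrite -(Gauss_dvdr _ c2) -e2 dvdn_mulr.
have hk : (k * A2 = a0 - ai)%N by rewrite /k divnK.
split; first by nia.
have : (A2 * (bi - b0) = A2 * (A1 * k))%N by nia.
move/eqP; rewrite eqn_mul2l (negbTE (lt0n_neq0 A2p)) /= => /eqP; nia.
Qed.

Theorem mainTheorem2 (R : realType) (A1 A2 : nat) (s : nat)
  (a : nat -> R) (alpha beta : nat -> nat) (B : nat) :
  (0 < A1)%N -> (0 < A2)%N -> coprime A1 A2 ->
  (2 <= s)%N ->
  (forall i, (i < s)%N -> a i != 0) ->
  (0 < B)%N ->
  (forall i, (i < s)%N -> (A1 * alpha i + A2 * beta i)%N = B) ->
  (forall i j, (i < j)%N -> (j < s)%N -> (alpha j < alpha i)%N) ->
  0 < a 0%N -> 0 < a s.-1 ->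
  ~~ odd (alpha 0%N) -> ~~ odd (beta 0%N) ->
  ~~ odd (alpha s.-1) -> ~~ odd (beta s.-1) ->
  (weakly_nondegenerate (@phi R s a alpha beta) <->
     (forall u : R, 0 < @gfun R s a alpha A2 u)) /\
  (weakly_nondegenerate (@phi R s a alpha beta) <->
     (forall u : R, @gfun R s a alpha A2 u != 0)).
Proof.
move=> A1p A2p cop s2 anz Bp HB Hdec a0p _ _ _ _ _.
have s0 : (0 < s)%N by apply: leq_trans s2.
have K : forall i, (i < s)%N -> let k := ((alpha 0%N - alpha i) %/ A2)%N in
    alpha 0%N = (alpha i + A2 * k)%N /\ beta i = (beta 0%N + A1 * k)%N.
  move=> i si; apply: kfacts => //.
    by case: i si => [|i] si //; apply/ltnW/Hdec.
  by rewrite HB // HB.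
have ident : forall x y u : R, u * x ^+ A2 = y ^+ A1 ->
    phi s a alpha beta x y = x ^+ alpha 0%N * y ^+ beta 0%N * gfun s a alpha A2 u.
  move=> x y u hu; rewrite /phi /gfun mulr_sumr; apply: eq_bigr => i _.
  have [ha hb] := K i (ltn_ord i).
  set k := ((alpha 0%N - alpha i) %/ A2)%N in ha hb *.
  rewrite [in RHS]ha hb !exprD !exprM -hu exprMn; ring.
have g0 : gfun s a alpha A2 0 = a 0%N.
  rewrite /gfun (bigD1 (Ordinal s0)) //= subnn div0n expr0 mulr1 big1 ?addr0 //.
  move=> i /eqP hi.
  have i0 : (0 < i)%N by case: i hi => [[|i]] //= ? h; case: h; apply: val_inj.
  have [ha _] := K i (ltn_ord i).
  set k := ((alpha 0%N - alpha i) %/ A2)%N in ha *.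
  have ai := Hdec 0%N i i0 (ltn_ord i).
  have kp : (0 < k)%N by rewrite lt0n; apply/eqP => k0; move: ha; rewrite k0; lia.
  by rewrite expr0n (negbTE (lt0n_neq0 kp)) mulr0.
have H3 : (forall u, gfun s a alpha A2 u != 0) -> weakly_nondegenerate (phi s a alpha beta).
  move=> hg x y x0 y0.
  rewrite (ident x y (y ^+ A1 / x ^+ A2)); last by rewrite mulfVK // expf_neq0.
  by rewrite !mulf_neq0 // expf_neq0.
have H1 : weakly_nondegenerate (phi s a alpha beta) -> forall u, gfun s a alpha A2 u != 0.
  move=> nd u; have [->|u0] := eqVneq u 0; first by rewrite g0 gt_eqF.
  have [oA1|eA1] := boolP (odd A1).
    have [y hy] := @oddroot R A1 u oA1.
    have y0 : y != 0 by apply: contra_neq u0 => y0; rewrite -hy y0 expr0n gtn_eqF.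
    have := nd 1 y (oner_neq0 _) y0.
    by rewrite (ident 1 y u) ?expr1n ?mulr1 // mul1r; apply: contra => /eqP->; rewrite mulr0.
  have oA2 : odd A2.
    apply: contraLR cop => eA2; rewrite /coprime; apply/negP => /eqP g1.
    have : (2 %| gcdn A1 A2)%N by rewrite dvdn_gcd !dvdn2 eA1.
    by rewrite g1.
  have [x hx] := @oddroot R A2 u^-1 oA2.
  have x0 : x != 0 by apply: contra_neq (invr_neq0 u0) => x0; rewrite -hx x0 expr0n gtn_eqF.
  have := nd x 1 x0 (oner_neq0 _).
  rewrite (ident x 1 u) ?expr1n ?hx ?divff // mulr1.
  by apply: contra => /eqP->; rewrite mulr0.
pose P : {poly R} := \sum_(i < s) a i *: 'X^((alpha 0%N - alpha i) %/ A2).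
have PE : forall v, P.[v] = gfun s a alpha A2 v.
  move=> v; rewrite /P horner_sum; apply: eq_bigr => i _.
  by rewrite hornerZ hornerXn.
have H2 : (forall u, gfun s a alpha A2 u != 0) -> forall u, 0 < gfun s a alpha A2 u.
  move=> hg u; rewrite ltNge; apply/negP => gu.
  have [u0|u0] := leP 0 u.
    have [||v _ rv] := @poly_ivt R (- P) 0 u => //.
      by rewrite !hornerN !PE g0 oppr_le0 ltW //= oppr_ge0.
    by move: rv; rewrite /root hornerN oppr_eq0 PE (negbTE (hg v)).
  have [||v _ rv] := @poly_ivt R P u 0.
  - exact: ltW.
  - by rewrite !PE g0 gu ltW.
  by move: rv; rewrite /root PE (negbTE (hg v)).
split; split.
- by move=> nd; apply: H2; apply: H1.
- by move=> hp; apply: H3 => u; rewrite gt_eqF.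
- exact: H1.
- exact: H3.
Qed.
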